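(* Let $m\ge 2$ and $a_1,a_2$ integers coprime to $m$, and let $G=\langle x_1,x_2\mid c_{12}^m,\ \overline{c_{12}^{(x_1)}}\,c_{12}^{a_1},\ \overline{c_{12}^{(x_2)}}\,c_{12}^{a_2}\rangle$, whose commutator subgroup is cyclic of order $m$ generated by $c_{12}$. Then an element $z=x_1^{n_1}x_2^{n_2}c_{12}^{n_c}$ ($n_1,n_2,n_c\in\mathbb Z$) lies in the center of $G$ if and only if $$n_c(a_1-1)\equiv S_{n_2}(a_2)\pmod m,\qquad n_c(a_2-1)\equiv S_{-n_1}(a_1)\pmod m.$$
   Context: Notation: $\bar g=g^{-1}$, $c_{gh}=\bar g\,\bar h\,g\,h$, $c^{(g)}=\bar g\,c\,g$, $c_{12}=c_{x_1x_2}$. For an integer $a$ coprime to $m$, $a^{-1}$ denotes its inverse modulo $m$, and $S_n(a)=(a^n-1)/(a-1)$ understood modulo $m$ as $S_n(a)=\sum_{s=0}^{n-1}a^s$ for $n\ge0$ and $S_n(a)=-\sum_{s=1}^{|n|}a^{-s}$ for $n<0$ (so $S_n(1)=n$). *)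

(* Defs.v *)
From mathcomp Require Import all_boot all_order all_algebra.
From Stdlib Require List.
Set Implicit Arguments. Unset Strict Implicit. Unset Printing Implicit Defensive.
Import GRing.Theory Num.Theory.
Local Open Scope ring_scope.

(* Words in the free group on x1, x2.  A letter is (g, e): g = false for x1,
   g = true for x2; e = true means the inverse letter. *)
Definition letter := (bool * bool)%type.
Definition word := seq letter.

Definition flip (l : letter) : letter := (l.1, ~~ l.2).
Definition winv (w : word) : word := rev (map flip w).

Definition wpow (w : word) (n : int) : word :=
  match n with
  | Posz k => flatten (nseq k w)
  | Negz k => flatten (nseq k.+1 (winv w))
  end.

Definition X1 : word := [:: (false, false)].
Definition X2 : word := [:: (true, false)].

Definition comm (g h : word) : word := winv g ++ winv h ++ g ++ h.
Definition conjw (c g : word) : word := winv g ++ c ++ g.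
Definition C12 : word := comm X1 X2.

Definition relators (m : nat) (a1 a2 : int) : seq word :=
  [:: wpow C12 m%:Z;
      winv (conjw C12 X1) ++ wpow C12 a1;
      winv (conjw C12 X2) ++ wpow C12 a2].

(* Equality in the group presented by generators x1, x2 and relators R:
   the smallest congruence (w.r.t. concatenation) on words identifying
   l l^-1 with the empty word and every relator with the empty word. *)
Inductive geq (R : seq word) : word -> word -> Prop :=
| geq_refl w : geq R w w
| geq_sym u v : geq R u v -> geq R v u
| geq_trans u v w : geq R u v -> geq R v w -> geq R u w
| geq_ctx p q u v : geq R u v -> geq R (p ++ u ++ q) (p ++ v ++ q)
| geq_free (l : letter) : geq R [:: l; flip l] [::]
| geq_rel r : List.In r R -> geq R r [::].

Definition central (R : seq word) (z : word) : Prop :=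
  forall w : word, geq R (z ++ w) (w ++ z).

(* inverse of a modulo m (a coprime to m): Bezout coefficient *)
Definition invmod (m a : int) : int := (egcdz a m).1.

Definition Sgeom (m : int) (n a : int) : int :=
  match n with
  | Posz k => \sum_(s < k) a ^+ s
  | Negz k => - \sum_(1 <= s < k.+2) (invmod m a) ^+ s
  end.

(* Main.v *)
Require Import Defs.
From mathcomp Require Import all_boot all_order all_algebra.
From mathcomp Require Import ring zify.
From Stdlib Require Import Setoid Morphisms.
Import GRing.Theory Num.Theory.
Set Implicit Arguments. Unset Strict Implicit.
Local Open Scope ring_scope.


Add Parametric Relation (R : seq word) : word (Defs.geq R)
  reflexivity proved by (@Defs.geq_refl R)
  symmetry proved by (@Defs.geq_sym R)
  transitivity proved by (@Defs.geq_trans R) as geq_setoid.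

Lemma geq_cat R u u' v v' : Defs.geq R u u' -> Defs.geq R v v' -> Defs.geq R (u ++ v) (u' ++ v').
Proof.
move=> H1 H2; apply: (@geq_trans _ _ (u' ++ v)).
  by have := geq_ctx [::] v H1; rewrite /= .
by have := geq_ctx u' [::] H2; rewrite /= !cats0.
Qed.

Add Parametric Morphism (R : seq word) : (@cat letter)
  with signature (Defs.geq R) ==> (Defs.geq R) ==> (Defs.geq R) as cat_mor.
Proof. by move=> *; apply: geq_cat. Qed.

Lemma flipK l : flip (flip l) = l.
Proof. by case: l => a b; rewrite /flip /= negbK. Qed.

Lemma winv_cons l w : winv (l :: w) = winv w ++ [:: flip l].
Proof. by rewrite /winv /= rev_cons cats1. Qed.

Lemma winv_cat u v : winv (u ++ v) = winv v ++ winv u.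
Proof. by rewrite /winv map_cat rev_cat. Qed.

Lemma winvK w : winv (winv w) = w.
Proof. by rewrite /winv map_rev revK -map_comp map_id_in // => x _; rewrite /= flipK. Qed.

Lemma free2 R l : Defs.geq R [:: flip l; l] [::].
Proof. by have := geq_free R (flip l); rewrite flipK. Qed.

Lemma cat_winv R w : Defs.geq R (w ++ winv w) [::].
Proof.
elim: w => [|l w IH]; first by reflexivity.
rewrite winv_cons.
have -> : (l :: w) ++ winv w ++ [:: flip l] = [:: l] ++ (w ++ winv w) ++ [:: flip l] by rewrite /= catA.
rewrite IH /=; exact: geq_free.
Qed.

Lemma winv_cat' R w : Defs.geq R (winv w ++ w) [::].
Proof. by have := cat_winv R (winv w); rewrite winvK. Qed.

Lemma left_cancel R p u v : Defs.geq R (p ++ u) (p ++ v) -> Defs.geq R u v.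
Proof.
move=> H.
have E x : Defs.geq R x (winv p ++ (p ++ x)) by rewrite catA winv_cat' /=; reflexivity.
by rewrite (E u) H -E; reflexivity.
Qed.

Lemma right_cancel R q u v : Defs.geq R (u ++ q) (v ++ q) -> Defs.geq R u v.
Proof.
move=> H.
have E x : Defs.geq R x ((x ++ q) ++ winv q) by rewrite -catA cat_winv cats0; reflexivity.
by rewrite (E u) H -E; reflexivity.
Qed.

Add Parametric Morphism (R : seq word) (l : letter) : (cons l)
  with signature (Defs.geq R) ==> (Defs.geq R) as cons_mor.
Proof. by move=> x y H; apply: (@geq_cat R [:: l] [:: l] x y) => //; reflexivity. Qed.

Lemma cancel_l R u v : Defs.geq R (winv u ++ u ++ v) v.
Proof. by rewrite catA winv_cat' /=; reflexivity. Qed.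

Lemma cancel_r R u v : Defs.geq R (u ++ winv u ++ v) v.
Proof. by rewrite catA cat_winv /=; reflexivity. Qed.

Lemma winv_conj c g : winv (conjw c g) = winv g ++ winv c ++ g.
Proof. by rewrite /conjw !winv_cat winvK catA. Qed.

Lemma freeC R l w : Defs.geq R (l :: flip l :: w) w.
Proof. exact: (geq_ctx [::] w (geq_free R l)). Qed.


Definition Sr (Z : unitRingType) (b : Z) (q : int) : Z :=
  match q with
  | Posz n => \sum_(i < n) b ^+ i
  | Negz n => - \sum_(1 <= i < n.+2) (b^-1) ^+ i
  end.
Arguments Sr {Z}.

Lemma int_ind2 (P : int -> Prop) : P 0 -> (forall q, P q <-> P (q + 1)) -> forall q, P q.
Proof.
move=> P0 HS.
have Hp n : P (Posz n).
  elim: n => // n IH; have -> : Posz n.+1 = Posz n + 1 by lia.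
  exact: (proj1 (HS _)).
have Hn n : P (- (Posz n)).
  elim: n => [|n IH]; first by rewrite oppr0.
  apply: (proj2 (HS _)); have -> : - Posz n.+1 + 1 = - Posz n by lia.
  done.
case=> n; first exact: Hp.
by rewrite NegzE; apply: Hn.
Qed.

Lemma SrS (Z : comUnitRingType) (b : Z) (ub : b \is a GRing.unit) q :
  Sr b (q + 1) = 1 + b * Sr b q.
Proof.
case: q => [n|n].
  have -> : Posz n + 1 = Posz n.+1 by lia.
  rewrite /= big_ord_recl expr0 mulr_sumr; congr (_ + _).
  by apply: eq_bigr => i _; rewrite exprS.
case: n => [|n].
  have -> : Negz 0 + 1 = 0 by [].
  by rewrite /= big_nat1 expr1 mulrN mulrV // addrN big_ord0.
have -> : Negz n.+1 + 1 = Negz n by rewrite !NegzE; lia.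
rewrite /= mulrN mulr_sumr.
have E k (F : nat -> Z) : \sum_(1 <= i < k.+1) F i = \sum_(i < k) F i.+1.
  by rewrite big_add1 /= big_mkord.
rewrite !E.
under [in RHS]eq_bigr => i _ do rewrite exprS mulrA mulrV // mul1r.
rewrite [in RHS]big_ord_recl /= expr0.
by rewrite opprD addrA addrN add0r.
Qed.


Definition rho (Z : comUnitRingType) (A B : Z) (l : letter) (s : int * int * Z) : int * int * Z :=
  let: (p, q, k) := s in
  match l with
  | (false, false) => (p + 1, q, k * A - Sr B q)
  | (false, true) => (p - 1, q, (k + Sr B q) / A)
  | (true, false) => (p, q + 1, k * B)
  | (true, true) => (p, q - 1, k / B)
  end.
Arguments rho {Z}.

Definition act (Z : comUnitRingType) (A B : Z) (w : word) (s : int * int * Z) :=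
  foldl (fun s l => rho A B l s) s w.
Arguments act {Z}.

Lemma act_cat (Z : comUnitRingType) (A B : Z) u v s : act A B (u ++ v) s = act A B v (act A B u s).
Proof. by rewrite /act foldl_cat. Qed.

Lemma rho_flip (Z : comUnitRingType) (A B : Z) (uA : A \is a GRing.unit) (uB : B \is a GRing.unit) l s :
  rho A B (flip l) (rho A B l s) = s.
Proof.
case: s => [[p q] k]; case: l => [[] []] /=;
  by rewrite ?subrK ?addrK ?mulrK ?divrK ?subrK ?addrK.
Qed.

Lemma act_winv (Z : comUnitRingType) (A B : Z) (uA : A \is a GRing.unit) (uB : B \is a GRing.unit) w s :
  act A B (winv w) (act A B w s) = s.
Proof.
elim: w s => [|l w IH] s //=.
rewrite winv_cons act_cat /= -/(act A B w (rho A B l s)) IH /=.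
exact: rho_flip.
Qed.

Lemma flat_comm (w : word) n : flatten (nseq n w) ++ w = w ++ flatten (nseq n w).
Proof. by elim: n => [|n IH] /=; rewrite ?cats0 // -catA IH. Qed.

Lemma act_wpow_gen (Z : comUnitRingType) (A B : Z) (uA : A \is a GRing.unit) (uB : B \is a GRing.unit)
  w (F : int -> int * int * Z -> int * int * Z) :
  (forall s, F 0 s = s) -> (forall z s, F (z + 1) s = act A B w (F z s)) ->
  forall z s, act A B (wpow w z) s = F z s.
Proof.
move=> F0 FS; case=> n s.
  elim: n s => [|n IH] s; first by rewrite F0.
  have -> : Posz n.+1 = Posz n + 1 by lia.
  by rewrite FS -IH /wpow /= addn1 /= -flat_comm act_cat.
elim: n s => [|n IH] s.
  rewrite -[F _ s](act_winv uA uB w) -FS /=.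
  have -> : Negz 0 + 1 = 0 by [].
  by rewrite F0 /wpow /= cats0.
rewrite -[F _ s](act_winv uA uB w) -FS.
have -> : Negz n.+1 + 1 = Negz n by rewrite !NegzE; lia.
by rewrite -IH -act_cat /wpow /= -catA -flat_comm.
Qed.

Lemma act_C12 (Z : comUnitRingType) (A B : Z) (uA : A \is a GRing.unit) (uB : B \is a GRing.unit) p q k :
  act A B C12 (p, q, k) = (p, q, k + 1).
Proof.
rewrite /act /= subrK.
have -> : q - 1 + 1 = q by rewrite subrK.
have E := SrS uB (q - 1); rewrite subrK in E.
rewrite -mulrA [_^-1 * A]mulrC mulrA divrK // mulrBl divrK // E.
congr (_, _, _); ring.
Qed.

Definition ER (Z : unitRingType) (b : Z) (z : int) : Z := 1 + (b - 1) * Sr b z.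

Lemma Sr0 (Z : unitRingType) (b : Z) : Sr b 0 = 0.
Proof. by rewrite (_ : 0%R = Posz 0) // /Sr big_ord0. Qed.

Lemma act_wpowC (Z : comUnitRingType) (A B : Z) (uA : A \is a GRing.unit) (uB : B \is a GRing.unit) z p q k :
  act A B (wpow C12 z) (p, q, k) = (p, q, k + z%:~R).
Proof.
pose F (z : int) (s : int * int * Z) := let: (p, q, k) := s in (p, q, k + z%:~R).
rewrite (@act_wpow_gen _ A B uA uB C12 F) //.
  by case=> [[p' q'] k']; rewrite /F addr0.
by move=> z' [[p' q'] k']; rewrite /F act_C12 // intrD addrA.
Qed.

Lemma act_wpowX1 (Z : comUnitRingType) (A B : Z) (uA : A \is a GRing.unit) (uB : B \is a GRing.unit) z p q k :
  act A B (wpow X1 z) (p, q, k) = (p + z, q, k * ER A z - Sr B q * Sr A z).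
Proof.
pose F (z : int) (s : int * int * Z) := let: (p, q, k) := s in (p + z, q, k * ER A z - Sr B q * Sr A z).
rewrite (@act_wpow_gen _ A B uA uB X1 F) //.
  by case=> [[p' q'] k']; rewrite /F /ER !Sr0 addr0 !mulr0 addr0 mulr1 subr0.
move=> z' [[p' q'] k']; rewrite /F /act /= /ER !SrS // addrA.
congr (_, _, _); ring.
Qed.

Lemma act_wpowX2 (Z : comUnitRingType) (A B : Z) (uA : A \is a GRing.unit) (uB : B \is a GRing.unit) z p q k :
  act A B (wpow X2 z) (p, q, k) = (p, q + z, k * ER B z).
Proof.
pose F (z : int) (s : int * int * Z) := let: (p, q, k) := s in (p, q + z, k * ER B z).
rewrite (@act_wpow_gen _ A B uA uB X2 F) //.
  by case=> [[p' q'] k']; rewrite /F /ER !Sr0 addr0 !mulr0 addr0 mulr1.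
move=> z' [[p' q'] k']; rewrite /F /act /= /ER !SrS // addrA.
congr (_, _, _); ring.
Qed.

Lemma act_winvC12 (Z : comUnitRingType) (A B : Z) (uA : A \is a GRing.unit) (uB : B \is a GRing.unit) p q k :
  act A B (winv C12) (p, q, k) = (p, q, k - 1).
Proof. by rewrite -{1}(subrK 1 k) -(act_C12 uA uB) act_winv. Qed.

Lemma sound m a1 a2 (Z : comUnitRingType) (A B : Z) (uA : A \is a GRing.unit) (uB : B \is a GRing.unit)
  (hm : (m%:R : Z) = 0) (hA : A = a1%:~R) (hB : B = a2%:~R) u v :
  Defs.geq (relators m a1 a2) u v -> forall s, act A B u s = act A B v s.
Proof.
elim=> {u v}.
- by [].
- by move=> u v _ IH s; rewrite IH.
- by move=> u v w _ IH1 _ IH2 s; rewrite IH1 IH2.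
- by move=> p q u v _ IH s; rewrite !act_cat IH.
- by move=> l s; rewrite /act /= rho_flip.
move=> r Hr [[p q] k]; case: Hr => [<-|[<-|[<-|[]]]].
- by rewrite act_wpowC // -pmulrn hm addr0.
- have -> : winv (conjw C12 X1) = winv X1 ++ winv C12 ++ X1 by [].
  rewrite !act_cat (_ : act A B (winv X1) (p, q, k) = (p - 1, q, (k + Sr B q) / A)) //.
  rewrite act_winvC12 // (_ : act A B X1 _ = (p - 1 + 1, q, ((k + Sr B q) / A - 1) * A - Sr B q)) //.
  rewrite act_wpowC // -hA subrK mulrBl divrK //; congr (_, _, _); ring.
- have -> : winv (conjw C12 X2) = winv X2 ++ winv C12 ++ X2 by [].
  rewrite !act_cat (_ : act A B (winv X2) (p, q, k) = (p, q - 1, k / B)) //.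
  rewrite act_winvC12 // (_ : act A B X2 _ = (p, q - 1 + 1, (k / B - 1) * B)) //.
  rewrite act_wpowC // -hB subrK mulrBl divrK //; congr (_, _, _); ring.
Qed.


Definition Cn (n : nat) : word := flatten (nseq n C12).
Definition Cp (m' : nat) (k : 'Z_(m'.+2)) : word := Cn (nat_of_ord k).
Arguments Cp {m'}.

Lemma CnD a b : Cn (a + b) = Cn a ++ Cn b.
Proof. by rewrite /Cn nseqD flatten_cat. Qed.

Lemma Cp0 m' : Cp (0 : 'Z_(m'.+2)) = [::].
Proof. by []. Qed.

Lemma Cp1 m' : Cp (1 : 'Z_(m'.+2)) = C12.
Proof.
by rewrite /Cp (_ : nat_of_ord (1 : 'Z_(m'.+2)) = 1%N).
Qed.

Lemma Cn_m m' a1 a2 : Defs.geq (relators m'.+2 a1 a2) (Cn m'.+2) [::].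
Proof. by apply: geq_rel; left. Qed.

Lemma Cn_mod m' a1 a2 n : Defs.geq (relators m'.+2 a1 a2) (Cn n) (Cp (n%:R : 'Z_(m'.+2))).
Proof.
rewrite /Cp val_Zp_nat // {1}(div.divn_eq n m'.+2) CnD.
have -> : Defs.geq (relators m'.+2 a1 a2) (Cn (n %/ m'.+2 * m'.+2)%N) [::]; last by reflexivity.
elim: (n %/ m'.+2)%N => [|j IH]; first by reflexivity.
by rewrite mulSn CnD IH Cn_m; reflexivity.
Qed.

Lemma Cp_add m' a1 a2 (k k' : 'Z_(m'.+2)) :
  Defs.geq (relators m'.+2 a1 a2) (Cp k ++ Cp k') (Cp (k + k')).
Proof.
rewrite /Cp -CnD Cn_mod natrD !natr_Zp; reflexivity.
Qed.

Lemma winvC m' a1 a2 : Defs.geq (relators m'.+2 a1 a2) (winv C12) (Cp (-1 : 'Z_(m'.+2))).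
Proof.
have E : Defs.geq (relators m'.+2 a1 a2) (Cp (-1 : 'Z_(m'.+2))) (Cp (-1 : 'Z_(m'.+2)) ++ C12 ++ winv C12).
  by rewrite cat_winv cats0; reflexivity.
by rewrite E catA -(Cp1 m') Cp_add addNr Cp0; reflexivity.
Qed.

Lemma Cp_int m' a1 a2 (z : int) :
  Defs.geq (relators m'.+2 a1 a2) (wpow C12 z) (Cp (z%:~R : 'Z_(m'.+2))).
Proof.
case: z => n.
  by rewrite /wpow -/(Cn n) Cn_mod -pmulrn; reflexivity.
rewrite /wpow NegzE intrN -pmulrn.
elim: n.+1 => [|j IH]; first by rewrite oppr0 Cp0; reflexivity.
rewrite (_ : flatten (nseq j.+1 (winv C12)) = winv C12 ++ flatten (nseq j (winv C12))) //.
by rewrite IH winvC Cp_add -natr1 opprD addrC; reflexivity.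
Qed.

Lemma C_X m' a1 a2 (X : word) (a : int) :
  Defs.geq (relators m'.+2 a1 a2) (winv (conjw C12 X) ++ wpow C12 a) [::] ->
  forall k : 'Z_(m'.+2),
  Defs.geq (relators m'.+2 a1 a2) (Cp k ++ X) (X ++ Cp (k * a%:~R)).
Proof.
move=> H.
have H1 : Defs.geq (relators m'.+2 a1 a2) (C12 ++ X) (X ++ Cp (a%:~R : 'Z_(m'.+2))).
  apply: (@left_cancel _ (winv X ++ winv C12)).
  rewrite -[(winv X ++ winv C12) ++ C12 ++ X]catA cancel_l winv_cat'.
  rewrite -Cp_int (_ : (winv X ++ winv C12) ++ X ++ wpow C12 a = winv (conjw C12 X) ++ wpow C12 a).
    by rewrite H; reflexivity.
  by rewrite winv_conj -!catA.
have Hn n : Defs.geq (relators m'.+2 a1 a2) (Cn n ++ X) (X ++ Cp (n%:R * a%:~R : 'Z_(m'.+2))).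
  elim: n => [|n IH].
    by rewrite mul0r Cp0 cats0 /=; reflexivity.
  rewrite (_ : Cn n.+1 = C12 ++ Cn n) // -catA IH catA H1 -catA Cp_add.
  by rewrite -natr1 mulrDl mul1r addrC; reflexivity.
by move=> k; rewrite /Cp Hn natr_Zp; reflexivity.
Qed.

Lemma wpowS R w q : Defs.geq R (wpow w (q + 1)) (wpow w q ++ w).
Proof.
case: q => [n|[|n]].
- have -> : Posz n + 1 = Posz n.+1 by lia.
  by rewrite /wpow /= (flat_comm w n); reflexivity.
- have -> : Negz 0 + 1 = 0 by [].
  by rewrite /wpow /= cats0 winv_cat'; reflexivity.
- have -> : Negz n.+1 + 1 = Negz n by rewrite !NegzE; lia.
  rewrite /wpow (_ : flatten (nseq n.+2 (winv w)) = winv w ++ flatten (nseq n.+1 (winv w))) //.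
  by rewrite -flat_comm -catA winv_cat' cats0; reflexivity.
Qed.

Lemma X2X1 m' a1 a2 :
  Defs.geq (relators m'.+2 a1 a2) (X2 ++ X1) (X1 ++ X2 ++ Cp (-1 : 'Z_(m'.+2))).
Proof.
have H : Defs.geq (relators m'.+2 a1 a2) (X2 ++ X1 ++ C12) (X1 ++ X2).
  rewrite (_ : X2 ++ X1 ++ C12 = [:: (true, false)] ++ [:: (false, false); flip (false, false)] ++ [:: flip (true, false)] ++ X1 ++ X2) //.
  rewrite (geq_free _ (false, false)) /= freeC; reflexivity.
rewrite [X1 ++ X2 ++ _]catA -H -[(X2 ++ X1 ++ C12) ++ _]catA -[(X1 ++ C12) ++ _]catA -(Cp1 m') Cp_add addrN Cp0 cats0.
reflexivity.
Qed.

Lemma rel2 m a1 a2 : Defs.geq (relators m a1 a2) (winv (conjw C12 X1) ++ wpow C12 a1) [::].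
Proof. by apply: geq_rel; right; left. Qed.

Lemma rel3 m a1 a2 : Defs.geq (relators m a1 a2) (winv (conjw C12 X2) ++ wpow C12 a2) [::].
Proof. by apply: geq_rel; right; right; left. Qed.

Lemma X2pow_X1 m' a1 a2 (uB : (a2%:~R : 'Z_(m'.+2)) \is a GRing.unit) q :
  Defs.geq (relators m'.+2 a1 a2) (wpow X2 q ++ X1)
    (X1 ++ wpow X2 q ++ Cp (- Sr (a2%:~R : 'Z_(m'.+2)) q)).
Proof.
set B := (a2%:~R : 'Z_(m'.+2)).
have step q' (t : 'Z_(m'.+2)) :
  Defs.geq (relators m'.+2 a1 a2) (wpow X2 q' ++ X1) (X1 ++ wpow X2 q' ++ Cp t) <->
  Defs.geq (relators m'.+2 a1 a2) (wpow X2 (q' + 1) ++ X1) (X1 ++ wpow X2 (q' + 1) ++ Cp (t * B - 1)).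
  have E1 : Defs.geq (relators m'.+2 a1 a2) ((wpow X2 q' ++ X1) ++ X2 ++ Cp (-1 : 'Z_(m'.+2)))
             (wpow X2 (q' + 1) ++ X1).
    by rewrite wpowS -!catA X2X1; reflexivity.
  have E2 : Defs.geq (relators m'.+2 a1 a2) ((X1 ++ wpow X2 q' ++ Cp t) ++ X2 ++ Cp (-1 : 'Z_(m'.+2)))
             (X1 ++ wpow X2 (q' + 1) ++ Cp (t * B - 1)).
    rewrite -!catA [Cp t ++ X2 ++ _]catA (C_X (rel3 _ _ _)) -catA Cp_add.
    by rewrite wpowS -!catA; reflexivity.
  split=> H.
    by rewrite -E1 -E2 H; reflexivity.
  by apply: (@right_cancel _ (X2 ++ Cp (-1 : 'Z_(m'.+2)))); rewrite E1 E2.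
move: q; apply: int_ind2 => [|q'].
  rewrite Sr0 oppr0 Cp0 /=; reflexivity.
rewrite SrS // (_ : - (1 + B * Sr B q') = - Sr B q' * B - 1); first exact: step.
ring.
Qed.

Definition NF (m' : nat) (s : int * int * 'Z_(m'.+2)) : word :=
  let: (p, q, k) := s in wpow X1 p ++ wpow X2 q ++ Cp k.

Lemma NF_x1 m' a1 a2 (uA : (a1%:~R : 'Z_(m'.+2)) \is a GRing.unit)
  (uB : (a2%:~R : 'Z_(m'.+2)) \is a GRing.unit) s :
  Defs.geq (relators m'.+2 a1 a2) (NF s ++ X1)
    (NF (rho (a1%:~R : 'Z_(m'.+2)) (a2%:~R) (false, false) s)).
Proof.
case: s => [[p q] k] /=.
rewrite -!catA (C_X (rel2 _ _ _)) [wpow X2 q ++ X1 ++ _]catA X2pow_X1 //.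
rewrite -!catA Cp_add [X in Cp X]addrC [wpow X1 p ++ X1 ++ _]catA -wpowS; reflexivity.
Qed.

Lemma NF_x2 m' a1 a2 (uA : (a1%:~R : 'Z_(m'.+2)) \is a GRing.unit)
  (uB : (a2%:~R : 'Z_(m'.+2)) \is a GRing.unit) s :
  Defs.geq (relators m'.+2 a1 a2) (NF s ++ X2)
    (NF (rho (a1%:~R : 'Z_(m'.+2)) (a2%:~R) (true, false) s)).
Proof.
case: s => [[p q] k] /=.
rewrite -!catA (C_X (rel3 _ _ _)) [wpow X2 q ++ X2 ++ _]catA -wpowS; reflexivity.
Qed.



Lemma complete m' a1 a2 (uA : (a1%:~R : 'Z_(m'.+2)) \is a GRing.unit)
  (uB : (a2%:~R : 'Z_(m'.+2)) \is a GRing.unit) w :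
  Defs.geq (relators m'.+2 a1 a2) w (NF (act (a1%:~R : 'Z_(m'.+2)) (a2%:~R) w (0, 0, 0))).
Proof.
set A := (a1%:~R : 'Z_(m'.+2)); set B := (a2%:~R : 'Z_(m'.+2)).
have Hinv g s : (forall s, Defs.geq (relators m'.+2 a1 a2) (NF s ++ [:: (g, false)]) (NF (rho A B (g, false) s))) ->
  Defs.geq (relators m'.+2 a1 a2) (NF s ++ [:: (g, true)]) (NF (rho A B (g, true) s)).
  move=> H.
  rewrite -{1}(rho_flip uA uB (g, true) s) /flip /= -H -catA.
  rewrite (_ : [:: (g, false)] ++ [:: (g, true)] = [:: (g, false); flip (g, false)]) //.
  by rewrite geq_free cats0; reflexivity.
elim/last_ind: w => [|w l IH].
  by rewrite /act /= Cp0; reflexivity.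
rewrite /act foldl_rcons -/(act A B w _) -cats1.
apply: Defs.geq_trans (geq_cat IH (Defs.geq_refl _ _)) _.
case: l => [[] []].
- exact: Hinv (fun s => NF_x2 uA uB s).
- exact: NF_x2.
- exact: Hinv (fun s => NF_x1 uA uB s).
- exact: NF_x1.
Qed.


Lemma unit_inv m' a : coprimez a (m'.+2)%:Z ->
  (a%:~R : 'Z_(m'.+2)) \is a GRing.unit /\
  ((invmod (m'.+2)%:Z a)%:~R = (a%:~R : 'Z_(m'.+2))^-1).
Proof.
move=> cop; rewrite /invmod.
case: egcdzP => u v E _ /=.
move: cop; rewrite /coprimez => /eqP g1.
have E' : (u%:~R * a%:~R : 'Z_(m'.+2)) = 1.
  have := congr1 (fun z : int => (z%:~R : 'Z_(m'.+2))) E.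
  rewrite g1 intrD !intrM /= -pmulrn (pchar_Zp (isT : (1 < m'.+2)%N)) mulr0 addr0.
  by [].
have uA : (a%:~R : 'Z_(m'.+2)) \is a GRing.unit by apply/unitrP; exists u%:~R; rewrite E' mulrC E'.
split=> //.
by rewrite -[u%:~R](mulrK uA) E' mul1r.
Qed.

Lemma Sgeom_cast m' a (n : int) : coprimez a (m'.+2)%:Z ->
  ((Sgeom (m'.+2)%:Z n a)%:~R : 'Z_(m'.+2)) = Sr (a%:~R : 'Z_(m'.+2)) n.
Proof.
move=> /unit_inv [_ hinv].
case: n => n /=.
  by rewrite rmorph_sum; apply: eq_bigr => i _; rewrite rmorphXn.
by rewrite intrN rmorph_sum; congr (- _); apply: eq_bigr => i _; rewrite rmorphXn; congr (_ ^+ _); exact: hinv.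
Qed.

Lemma Zp_eq_mod m' (x y : int) :
  ((x%:~R : 'Z_(m'.+2)) = y%:~R) <-> (x = y %[mod (m'.+2)%:Z])%Z.
Proof.
suff -> : ((x%:~R : 'Z_(m'.+2)) = y%:~R) <-> ((m'.+2)%:Z %| x - y)%Z.
  by rewrite -eqz_mod_dvd; split => [/eqP|->].
have -> : ((x%:~R : 'Z_(m'.+2)) = y%:~R) <-> (((x - y)%:~R : 'Z_(m'.+2)) = 0).
  rewrite intrB; split => [->|/eqP]; first by rewrite subrr.
  by rewrite subr_eq0 => /eqP.
case: (x - y) => n; rewrite dvdzE /=.
  rewrite -pmulrn; split.
    move/(congr1 (@nat_of_ord _)); rewrite val_Zp_nat //= => H.
    by rewrite /dvdn H.
  move=> H; apply: ord_inj; rewrite val_Zp_nat //=.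
  by move: H; rewrite /dvdn => /eqP.
rewrite NegzE intrN -pmulrn; split.
  move/eqP; rewrite oppr_eq0 => /eqP /(congr1 (@nat_of_ord _)); rewrite val_Zp_nat //= => H.
  by rewrite /dvdn H.
move=> H; apply/eqP; rewrite oppr_eq0; apply/eqP; apply: ord_inj; rewrite val_Zp_nat //=.
by move: H; rewrite /dvdn => /eqP.
Qed.

Lemma ER_Sr_neg (Z : comUnitRingType) (A : Z) (uA : A \is a GRing.unit) (n : int) :
  ER A n * Sr A (- n) = - Sr A n.
Proof.
pose f (n : int) := ER A n * Sr A (- n) + Sr A n.
suff : f n = 0 by move/eqP; rewrite addr_eq0 => /eqP.
have f0 : f 0 = 0 by rewrite /f oppr0 !Sr0 mulr0 addr0.
rewrite -f0; move: n; apply: int_ind2 => // n.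
suff -> : f (n + 1) = f n by [].
rewrite /f /ER.
have E := SrS uA (- (n + 1)).
rewrite (_ : - (n + 1) + 1 = - n) in E; last by ring.
rewrite E SrS //; ring.
Qed.

Lemma alg (Z : comRingType) (A B X SA SB SAm : Z) :
  (1 + (A - 1) * SA) * SAm = - SA ->
  (X * A - SB = X /\ X * B = - SA * (1 + (B - 1) * SB) + X) <->
  (X * (A - 1) = SB /\ X * (B - 1) = SAm).
Proof.
set EA := 1 + (A - 1) * SA; set EB := 1 + (B - 1) * SB => K.
have C1 : (X * A - SB = X) <-> (X * (A - 1) = SB).
  split=> H; apply/eqP; rewrite -subr_eq0; apply/eqP.
    by rewrite -[RHS](subrr X) -{2}H; ring.
  by rewrite -[RHS](subrr SB) -{1}H; ring.
split=> [[H1 H2]|[H1 H2]].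
  have P1 := (proj1 C1 H1); split => //.
  have h : EA * EB = 1.
    apply/eqP; rewrite -subr_eq0; apply/eqP.
    have -> : EA * EB - 1 = (A - 1) * (X * (B - 1) + SA * EB) - (B - 1) * (X * (A - 1) - SB).
      by rewrite /EA /EB; ring.
    rewrite P1 subrr mulr0 subr0 (_ : X * (B - 1) = X * B - X); last by ring.
    by rewrite H2 /EB; ring.
  have -> : X * (B - 1) = - SA * EB by rewrite mulrBr mulr1 H2; ring.
  by rewrite -K -mulrA mulrCA h mulr1.
split; first by apply/C1.
have h : EA * EB = 1.
  apply/eqP; rewrite -subr_eq0; apply/eqP.
  have -> : EA * EB - 1 = EA * ((B - 1) * (SB - X * (A - 1)) + (A - 1) * (X * (B - 1) - SAm))
                          + (A - 1) * (EA * SAm + SA).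
    by rewrite /EA /EB; ring.
  by rewrite H1 H2 K !subrr addNr; ring.
have -> : X * B = X * (B - 1) + X by ring.
by rewrite H2 -K -mulrA mulrCA h mulr1.
Qed.

Lemma central_gen R z :
  Defs.geq R (z ++ X1) (X1 ++ z) -> Defs.geq R (z ++ X2) (X2 ++ z) -> central R z.
Proof.
move=> h1 h2.
have hl g : Defs.geq R (z ++ [:: (g, false)]) ([:: (g, false)] ++ z) by case: g.
have hl' l : Defs.geq R (z ++ [:: l]) ([:: l] ++ z).
  case: l => g [|]; last exact: hl.
  have E1 : Defs.geq R (z ++ [:: (g, true)]) ([:: (g, true)] ++ [:: (g, false)] ++ z ++ [:: (g, true)]).
    have F : Defs.geq R ([:: (g, true)] ++ [:: (g, false)]) [::] := free2 R (g, false).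
    by rewrite catA F /=; reflexivity.
  rewrite E1 [[:: (g, false)] ++ z ++ _]catA -(hl g) -[(z ++ _) ++ _]catA.
  have F : Defs.geq R ([:: (g, false)] ++ [:: (g, true)]) [::] := geq_free R (g, false).
  by rewrite F cats0; reflexivity.
elim=> [|l w IH]; first by rewrite cats0; reflexivity.
rewrite -cat1s catA hl' -catA IH; reflexivity.
Qed.

Lemma tripleE (Z : Type) (p q p' q' : int) (k k' : Z) :
  p = p' -> q = q' -> ((p, q, k) = (p', q', k') <-> k = k').
Proof. by move=> -> ->; split => [[]|->]. Qed.

Unset Implicit Arguments.

Theorem proposition14 (m : nat) (a1 a2 n1 n2 nc : int) :
  (2 <= m)%N -> coprimez a1 m%:Z -> coprimez a2 m%:Z ->
  central (relators m a1 a2) (wpow X1 n1 ++ wpow X2 n2 ++ wpow C12 nc) <->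
  ((nc * (a1 - 1) = Sgeom m%:Z n2 a2 %[mod m%:Z])%Z /\
   (nc * (a2 - 1) = Sgeom m%:Z (- n1) a1 %[mod m%:Z])%Z).
Proof.
case: m => [|[|m']] // _ c1 c2.
have [uA hA] := unit_inv c1; have [uB hB] := unit_inv c2.
set A := (a1%:~R : 'Z_(m'.+2)) in uA hA; set B := (a2%:~R : 'Z_(m'.+2)) in uB hB.
set z := wpow X1 n1 ++ wpow X2 n2 ++ wpow C12 nc.
set X := (nc%:~R : 'Z_(m'.+2)).
have hm : ((m'.+2)%:R : 'Z_(m'.+2)) = 0 by apply: pchar_Zp.
have CI : central (relators m'.+2 a1 a2) z <->
  (act A B (z ++ X1) (0, 0, 0) = act A B (X1 ++ z) (0, 0, 0) /\
   act A B (z ++ X2) (0, 0, 0) = act A B (X2 ++ z) (0, 0, 0)).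
  split.
    by move=> H; split; apply: (sound uA uB hm erefl erefl (H _)).
  move=> [E1 E2]; apply: central_gen.
    apply: Defs.geq_trans (complete uA uB _) _; rewrite E1; apply: Defs.geq_sym; exact: complete.
  apply: Defs.geq_trans (complete uA uB _) _; rewrite E2; apply: Defs.geq_sym; exact: complete.
have aX1 p q k : act A B X1 (p, q, k) = (p + 1, q, k * A - Sr B q) by [].
have aX2 p q k : act A B X2 (p, q, k) = (p, q + 1, k * B) by [].
have V1 : act A B (z ++ X1) (0, 0, 0) = (n1 + 1, n2, X * A - Sr B n2).
  rewrite /z !act_cat act_wpowX1 // act_wpowX2 // act_wpowC // aX1 !add0r !Sr0.
  congr (_, _, _); ring.
have V2 : act A B (X1 ++ z) (0, 0, 0) = (n1 + 1, n2, X).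
  rewrite /z !act_cat aX1 act_wpowX1 // act_wpowX2 // act_wpowC // !add0r !Sr0.
  congr (_, _, _); ring.
have V3 : act A B (z ++ X2) (0, 0, 0) = (n1, n2 + 1, X * B).
  rewrite /z !act_cat act_wpowX1 // act_wpowX2 // act_wpowC // aX2 !add0r !Sr0.
  congr (_, _, _); ring.
have V4 : act A B (X2 ++ z) (0, 0, 0) = (n1, n2 + 1, - Sr A n1 * (1 + (B - 1) * Sr B n2) + X).
  rewrite /z !act_cat aX2 act_wpowX1 // act_wpowX2 // act_wpowC // !add0r.
  rewrite (_ : (1 : int) = 0 + 1) // SrS // !Sr0 /ER.
  congr (_, _, _); ring.
have M1 : act A B (z ++ X1) (0, 0, 0) = act A B (X1 ++ z) (0, 0, 0) <-> X * A - Sr B n2 = X.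
  by rewrite V1 V2; split => [/(congr1 snd)|->].
have M2 : act A B (z ++ X2) (0, 0, 0) = act A B (X2 ++ z) (0, 0, 0) <->
    X * B = - Sr A n1 * (1 + (B - 1) * Sr B n2) + X.
  by rewrite V3 V4; split => [/(congr1 snd)|->].
have P1 : (nc * (a1 - 1) = Sgeom (m'.+2)%:Z n2 a2 %[mod (m'.+2)%:Z])%Z <-> X * (A - 1) = Sr B n2.
  by rewrite -Zp_eq_mod intrM intrB Sgeom_cast.
have P2 : (nc * (a2 - 1) = Sgeom (m'.+2)%:Z (- n1) a1 %[mod (m'.+2)%:Z])%Z <-> X * (B - 1) = Sr A (- n1).
  by rewrite -Zp_eq_mod intrM intrB Sgeom_cast.
have K := ER_Sr_neg uA n1; rewrite /ER in K.
have AL := @alg _ A B X (Sr A n1) (Sr B n2) (Sr A (- n1)) K.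
split.
  move/CI => [/M1 h1 /M2 h2].
  have [h1' h2'] := proj1 AL (conj h1 h2).
  by split; [apply/P1|apply/P2].
move=> [/P1 h1 /P2 h2].
have [h1' h2'] := proj2 AL (conj h1 h2).
by apply/CI; split; [apply/M1|apply/M2].
Qed.
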